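(* Let $\mathcal{X}\subseteq\mathbb{R}^d$ be nonempty closed convex with $\mathbf{0}\in\mathcal{X}$ and diameter at most $D$, let $f_1,\dots,f_T:\mathcal{X}\to\mathbb{R}$ be convex differentiable with $\max_{\mathbf{x}\in\mathcal{X}}\|\nabla f_t(\mathbf{x})\|_2\le G$, and let $\Phi_t:\mathcal{X}\to\mathcal{X}$ satisfy $\|\Phi_t(\mathbf{x})-\Phi_t(\mathbf{x}')\|_2\le\|\mathbf{x}-\mathbf{x}'\|_2$ for all $t\in[T]$, $\mathbf{x},\mathbf{x}'\in\mathcal{X}$. Consider $\mathbf{x}_1\in\mathcal{X}$ and, for $t\ge1$, $\bar{\mathbf{x}}_{t+1}=\Pi_{\mathcal{X}}[\mathbf{x}_t-\eta\nabla f_t(\mathbf{x}_t)]$, $\mathbf{x}_{t+1}=\Phi_t(\bar{\mathbf{x}}_{t+1})$, with $\eta>0$. Then for any $\mathbf{u}_1,\dots,\mathbf{u}_{T+1}\in\mathcal{X}$, \[ \sum_{t=1}^T f_t(\mathbf{x}_t)-\sum_{t=1}^T f_t(\mathbf{u}_t)\le\frac{D^2}{2\eta}+\frac D\eta\sum_{t=1}^T\|\mathbf{u}_{t+1}-\Phi_t(\mathbf{u}_t)\|_2+\frac{\eta TG^2}{2}. \]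
   Context: $\Pi_{\mathcal{X}}$ is Euclidean projection onto $\mathcal{X}$; $f_t$ is revealed after $\mathbf{x}_t$ is played, and the maps $\Phi_t$ are given to the learner. *)

(* Defs.v *)
From Stdlib Require Import Reals.
From mathcomp Require Import all_boot.

Set Implicit Arguments.
Unset Strict Implicit.
Unset Printing Implicit Defensive.

Local Open Scope R_scope.

Definition vec (d : nat) := 'I_d -> R.

Definition Evadd d (u v : vec d) : vec d := fun i => u i + v i.
Definition Evsub d (u v : vec d) : vec d := fun i => u i - v i.
Definition Evscale d (a : R) (u : vec d) : vec d := fun i => a * u i.
Definition Evzero d : vec d := fun _ => 0.

Definition Edot d (u v : vec d) : R := \big[Rplus/0]_(i < d) (u i * v i).
Definition Enorm2 d (u : vec d) : R := sqrt (Edot u u).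

Definition Econvex_set d (C : vec d -> Prop) : Prop :=
  forall x y l, C x -> C y -> 0 <= l <= 1 ->
    C (Evadd (Evscale l x) (Evscale (1 - l) y)).

Definition Eclosed_set d (C : vec d -> Prop) : Prop :=
  forall y, ~ C y -> exists eps, 0 < eps /\
    forall z, Enorm2 (Evsub z y) < eps -> ~ C z.

Definition Ediam_le d (C : vec d -> Prop) (D : R) : Prop :=
  forall x y, C x -> C y -> Enorm2 (Evsub x y) <= D.

Definition Eis_proj d (C : vec d -> Prop) (y p : vec d) : Prop :=
  C p /\ forall z, C z -> Enorm2 (Evsub y p) <= Enorm2 (Evsub y z).

Definition Econvex_on d (C : vec d -> Prop) (f : vec d -> R) : Prop :=
  forall x y l, C x -> C y -> 0 <= l <= 1 ->
    f (Evadd (Evscale l x) (Evscale (1 - l) y)) <= l * f x + (1 - l) * f y.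

Definition Ehas_gradient d (f : vec d -> R) (x g : vec d) : Prop :=
  forall eps, 0 < eps -> exists delta, 0 < delta /\
    forall h, Enorm2 h < delta ->
      Rabs (f (Evadd x h) - f x - Edot g h) <= eps * Enorm2 h.

Definition EsumT (T : nat) (F : nat -> R) : R := \big[Rplus/0]_(1 <= t < T.+1) F t.

(* Main.v *)
From HB Require Import structures.
Require Import Defs.
From Stdlib Require Import Reals Lra Psatz FunctionalExtensionality.
From mathcomp Require Import all_boot.
Local Open Scope R_scope.
HB.instance Definition _ := Monoid.isComLaw.Build R 0 Rplus (fun a b c => esym (Rplus_assoc a b c)) Rplus_comm Rplus_0_l.
Section Helpers.
Local Set Implicit Arguments.

Lemma sum_add (I : Type) (r : seq I) (P : pred I) (F G : I -> R) :
  \big[Rplus/0]_(i <- r | P i) (F i + G i) =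
  \big[Rplus/0]_(i <- r | P i) F i + \big[Rplus/0]_(i <- r | P i) G i.
Proof.
apply: (big_rec3 (fun a b c => a = b + c)); first lra.
move=> i a b c _ ->; lra.
Qed.

Lemma sum_scal (I : Type) (r : seq I) (P : pred I) (a : R) (F : I -> R) :
  \big[Rplus/0]_(i <- r | P i) (a * F i) = a * \big[Rplus/0]_(i <- r | P i) F i.
Proof.
apply: (big_rec2 (fun x y => x = a * y)); first lra.
move=> i x y _ ->; lra.
Qed.

Lemma sum_ge0 (I : Type) (r : seq I) (P : pred I) (F : I -> R) :
  (forall i, 0 <= F i) -> 0 <= \big[Rplus/0]_(i <- r | P i) F i.
Proof.
move=> H; apply: (big_rec (fun x => 0 <= x)); first lra.
move=> i x _ Hx; have := H i; lra.
Qed.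

Lemma Edot_ext d (u v u' v' : vec d) :
  (forall i, u i * v i = u' i * v' i) -> Edot u v = Edot u' v'.
Proof. move=> H; rewrite /Edot; apply: eq_bigr => i _; exact: H. Qed.

Lemma Edot_sym d (u v : vec d) : Edot u v = Edot v u.
Proof. apply: Edot_ext => i; ring. Qed.

Lemma Edot_lin d (v p q w : vec d) (a b : R) :
  (forall i, v i = a * p i + b * q i) -> Edot v w = a * Edot p w + b * Edot q w.
Proof.
move=> H; rewrite /Edot -!sum_scal -sum_add; apply: eq_bigr => i _; rewrite H; ring.
Qed.

Lemma Edot_comb2 d (v p q : vec d) (a b : R) :
  (forall i, v i = a * p i + b * q i) ->
  Edot v v = a^2 * Edot p p + 2 * a * b * Edot p q + b^2 * Edot q q.
Proof.
move=> H; rewrite (Edot_lin v p q v H) (Edot_sym p v) (Edot_sym q v)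
  (Edot_lin v p q p H) (Edot_lin v p q q H) (Edot_sym q p); ring.
Qed.

Lemma Edot_ge0 d (v : vec d) : 0 <= Edot v v.
Proof. apply: sum_ge0 => i; nra. Qed.

Lemma Enorm2_sq d (v : vec d) : Enorm2 v ^ 2 = Edot v v.
Proof. rewrite /Enorm2 /= Rmult_1_r sqrt_sqrt //; exact: Edot_ge0. Qed.

Lemma Enorm2_ge0 d (v : vec d) : 0 <= Enorm2 v.
Proof. exact: sqrt_pos. Qed.

Lemma CS d (a b : vec d) : Edot a b <= Enorm2 a * Enorm2 b.
Proof.
have Hq : forall l, 0 <= Edot a a * l^2 + 2 * Edot a b * l + Edot b b.
  move=> l.
  have := Edot_ge0 (fun i => l * a i + 1 * b i).
  rewrite (@Edot_comb2 _ _ a b l 1) //; lra.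
have Ha := Edot_ge0 a; have Hb := Edot_ge0 b.
have Hsq : (Edot a b)^2 <= Edot a a * Edot b b.
  case: (Req_dec (Edot a a) 0) => Haa.
  - case: (Req_dec (Edot a b) 0) => Hab; first by rewrite Hab Haa; lra.
    have := Hq (- (Edot b b + 1) / (2 * Edot a b)).
    have -> : 2 * Edot a b * (- (Edot b b + 1) / (2 * Edot a b)) = -(Edot b b+1) by field.
    rewrite Haa; lra.
  - have := Hq (- Edot a b / Edot a a).
    move=> H; have Hp : 0 < Edot a a by lra.
    have : 0 <= Edot a a * (Edot a a * (- Edot a b / Edot a a) ^ 2 +
      2 * Edot a b * (- Edot a b / Edot a a) + Edot b b) by nra.
    have -> : Edot a a * (Edot a a * (- Edot a b / Edot a a) ^ 2 +
      2 * Edot a b * (- Edot a b / Edot a a) + Edot b b)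
      = Edot a a * Edot b b - Edot a b ^ 2 by field; lra.
    lra.
have Hn := Enorm2_sq a; have Hm := Enorm2_sq b.
have := Enorm2_ge0 a; have := Enorm2_ge0 b.
rewrite -Hn -Hm in Hsq.
set x := Edot a b in Hsq *; set na := Enorm2 a in Hsq *; set nb := Enorm2 b in Hsq *.
move=> H1 H2.
case: (Rle_dec x 0) => Hx; first nra.
have H3 : 0 <= na * nb by nra.
have : (na*nb - x) * (na * nb + x) >= 0 by nra.
nra.
Qed.

Lemma norm_le_sq d (a b : vec d) : Enorm2 a <= Enorm2 b -> Edot a a <= Edot b b.
Proof.
move=> H; rewrite -!Enorm2_sq; have := Enorm2_ge0 a; have := Enorm2_ge0 b; nra.
Qed.

Lemma sq_le_norm d (a b : vec d) : Edot a a <= Edot b b -> Enorm2 a <= Enorm2 b.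
Proof. move=> H; rewrite /Enorm2; apply: sqrt_le_1_alt; exact: H. Qed.

Lemma triangle d (w a b : vec d) : (forall i, w i = a i + b i) ->
  Enorm2 w <= Enorm2 a + Enorm2 b.
Proof.
move=> H.
have E : Edot w w = Edot a a + 2 * Edot a b + Edot b b.
  rewrite (Edot_comb2 w a b (a:=1) (b:=1)); first ring.
  move=> i; rewrite H; ring.
have := CS a b; have := Enorm2_sq w; have := Enorm2_sq a; have := Enorm2_sq b.
have := Enorm2_ge0 w; have := Enorm2_ge0 a; have := Enorm2_ge0 b.
nra.
Qed.

Lemma norm_eq d (v w : vec d) : Edot v v = Edot w w -> Enorm2 v = Enorm2 w.
Proof. by rewrite /Enorm2 => ->. Qed.

Lemma proj_ne d (X : vec d -> Prop) z p u : Econvex_set X -> Eis_proj X z p -> X u ->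
  Edot (Evsub p u) (Evsub p u) <= Edot (Evsub z u) (Evsub z u).
Proof.
move=> Hc [Xp Hp] Xu.
set r := Evsub z p; set e := Evsub p u.
have He : Edot (Evsub z u) (Evsub z u) = Edot r r + 2 * Edot r e + Edot e e.
  rewrite (Edot_comb2 _ r e (a:=1) (b:=1)); first ring.
  move=> i; rewrite /r /e /Evsub; ring.
have Hc0 : 0 <= Edot r e.
  case: (Rle_dec 0 (Edot r e)) => // Hn; exfalso.
  set c := Edot r e in Hn *; set N := Edot e e.
  have HN : 0 <= N by apply: Edot_ge0.
  set l := - c / (N - c).
  have Hl0 : 0 < l by rewrite /l; apply: Rdiv_lt_0_compat; lra.
  have Hl1 : l <= 1.
    rewrite /l /Rdiv; apply (Rmult_le_reg_r (N-c)); first lra.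
    rewrite Rmult_assoc Rinv_l; lra.
  have Xw := Hc u p l Xu Xp (conj (Rlt_le _ _ Hl0) Hl1).
  have := @norm_le_sq _ _ _ (Hp _ Xw).
  rewrite (Edot_comb2 (Evsub z (Evadd (Evscale l u) (Evscale (1 - l) p))) r e (a:=1) (b:=l)).
    2: by move=> i; rewrite /r /e /Evsub /Evadd /Evscale /=; ring.
  move=> H.
  have E1 : Edot r r = Edot (Evsub z p) (Evsub z p) by [].
  have H2 : 0 <= l * (2 * c + l * N).
    have -> : l * (2 * c + l * N) = 2 * 1 * l * c + l^2 * N by ring.
    rewrite /c /N; lra.
  have H3 : 0 <= 2 * c + l * N.
    by apply: (Rmult_le_reg_l l); lra.
  have H4 : l * N * (N - c) = - c * N by rewrite /l; field; lra.
  nra.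
have := Edot_ge0 r; lra.
Qed.

Lemma linz d (X : vec d -> Prop) f x u g : Econvex_on X f -> X x -> X u ->
  Ehas_gradient f x g -> f x - f u <= Edot g (Evsub x u).
Proof.
move=> Hc Xx Xu Hg.
set h := Evsub u x.
have Egh : Edot g (Evsub x u) = - Edot g h.
  rewrite Edot_sym (Edot_lin (Evsub x u) h h g (a:=-1) (b:=0)).
    rewrite Edot_sym; ring.
  by move=> i; rewrite /h /Evsub; ring.
case: (Rle_dec (f x - f u) (Edot g (Evsub x u))) => // Hn; exfalso.
set k := f x - f u - Edot g (Evsub x u).
have Hk : 0 < k by rewrite /k; lra.
set N := Enorm2 h.
have HN : 0 <= N by apply: Enorm2_ge0.
have Heps : 0 < k / (2 * (N + 1)) by apply: Rdiv_lt_0_compat; lra.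
have [delta [Hd Hdel]] := Hg _ Heps.
set l := delta / (delta + N + 1).
have Hl0 : 0 < l by rewrite /l; apply: Rdiv_lt_0_compat; lra.
have HlN : l * (delta + N + 1) = delta by rewrite /l; field; lra.
have Hl1 : l <= 1 by nra.
set lh := Evscale l h.
have Nlh : Enorm2 lh <= l * N.
  have E : Edot lh lh = l^2 * Edot h h.
    rewrite (Edot_comb2 lh h h (a:=l) (b:=0)); first ring.
    by move=> i; rewrite /lh /Evscale; ring.
  have := Enorm2_sq lh; have := Enorm2_sq h; have := Enorm2_ge0 lh.
  rewrite -/N => H1 H2 H3.
  have H4 : (Enorm2 lh - l * N) * (Enorm2 lh + l * N) = 0.
    have -> : (Enorm2 lh - l * N) * (Enorm2 lh + l * N) = Enorm2 lh ^ 2 - l^2 * N^2 by ring.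
    rewrite H3 H2 E; ring.
  have H5 : 0 <= l * N by nra.
  case: (Rle_dec (Enorm2 lh) (l * N)) => // H6.
  have : 0 < (Enorm2 lh - l * N) * (Enorm2 lh + l * N) by apply: Rmult_lt_0_compat; lra.
  lra.
have Hlt : Enorm2 lh < delta by nra.
have Hb := Hdel _ Hlt.
have Eglh : Edot g lh = l * Edot g h.
  rewrite Edot_sym (Edot_lin lh h h g (a:=l) (b:=0)).
    rewrite Edot_sym; ring.
  by move=> i; rewrite /lh /Evscale; ring.
have Ept : Evadd x lh = Evadd (Evscale l u) (Evscale (1 - l) x).
  apply: functional_extensionality => i.
  rewrite /lh /h /Evadd /Evscale /Evsub; ring.
have Hcv := Hc u x l Xu Xx (conj (Rlt_le _ _ Hl0) Hl1).
rewrite -Ept in Hcv.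
rewrite Eglh in Hb.
have Hlow : l * Edot g h - k / (2 * (N + 1)) * (l * N) <= f (Evadd x lh) - f x.
  have : k / (2 * (N + 1)) * Enorm2 lh <= k / (2 * (N + 1)) * (l * N).
    by apply: Rmult_le_compat_l; lra.
  move: (Rle_abs (-(f (Evadd x lh) - f x - l * Edot g h))).
  rewrite Rabs_Ropp; lra.
have H1 : l * (Edot g h - k / (2 * (N + 1)) * N) <= l * (f u - f x) by nra.
have H2 : Edot g h - k / (2 * (N + 1)) * N <= f u - f x.
  by apply: (Rmult_le_reg_l l).
have H3 : k / (2 * (N + 1)) * N < k.
  have -> : k / (2 * (N + 1)) * N = k * (N / (2 * (N + 1))) by field; lra.
  have : N / (2 * (N + 1)) < 1.
    rewrite /Rdiv; apply (Rmult_lt_reg_r (2 * (N+1))); first lra.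
    rewrite Rmult_assoc Rinv_l; lra.
  have : 0 <= N / (2 * (N + 1)) by apply: Rmult_le_pos; [lra | apply: Rlt_le; apply: Rinv_0_lt_compat; lra].
  nra.
have Ek : k = f x - f u + Edot g h by rewrite /k Egh; ring.
clearbody k; lra.
Qed.

Lemma EsumT_S T (F : nat -> R) : EsumT T.+1 F = EsumT T F + F T.+1.
Proof. by rewrite /EsumT big_nat_recr. Qed.

Lemma tele (T : nat) (F H b A : nat -> R) (c k : R) : 0 < c ->
  (forall t, (1 <= t <= T)%N -> F t - H t <= (A t - A t.+1) / c + b t + k) ->
  EsumT T F - EsumT T H <= (A 1%N - A T.+1) / c + EsumT T b + INR T * k.
Proof.
move=> Hc; elim: T => [|T IH] Hs.
  rewrite /EsumT !big_geq //=; have -> : (A 1%N - A 1%N) / c = 0 by field; lra.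
  lra.
have IH' := IH (fun t Ht => Hs t ltac:(case/andP: Ht => H1 H2; rewrite H1 /=; exact: leqW)).
have HT := Hs T.+1 ltac:(by rewrite leqnn).
rewrite !EsumT_S S_INR.
have -> : (A 1%N - A T.+2) / c = (A 1%N - A T.+1) / c + (A T.+1 - A T.+2) / c by field; lra.
lra.
Qed.
End Helpers.

Theorem theorem6 (d : nat) (X : vec d -> Prop) (D G eta : R) (T : nat)
  (f : nat -> vec d -> R) (grad : nat -> vec d -> vec d)
  (Phi : nat -> vec d -> vec d)
  (x xbar u : nat -> vec d) :
  (exists x0 : vec d, X x0) ->
  Eclosed_set X -> Econvex_set X -> X (@Evzero d) -> Ediam_le X D ->
  (forall t, (1 <= t <= T)%N ->
     Econvex_on X (f t) /\
     (forall y, X y -> Ehas_gradient (f t) y (grad t y)) /\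
     (forall y, X y -> Enorm2 (grad t y) <= G)) ->
  (forall t, (1 <= t <= T)%N ->
     (forall y, X y -> X (Phi t y)) /\
     (forall y y', X y -> X y' ->
        Enorm2 (Evsub (Phi t y) (Phi t y')) <= Enorm2 (Evsub y y'))) ->
  0 < eta ->
  X (x 1%N) ->
  (forall t, (1 <= t <= T)%N ->
     Eis_proj X (Evsub (x t) (Evscale eta (grad t (x t)))) (xbar t.+1) /\
     x t.+1 = Phi t (xbar t.+1)) ->
  (forall t, (1 <= t <= T.+1)%N -> X (u t)) ->
  EsumT T (fun t => f t (x t)) - EsumT T (fun t => f t (u t))
  <= D ^ 2 / (2 * eta)
     + D / eta * EsumT T (fun t => Enorm2 (Evsub (u t.+1) (Phi t (u t))))
     + eta * INR T * G ^ 2 / 2.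
Proof.
move=> _ _ Hcx _ Hdiam Hf HPhi Heta Hx1 Hit Hu.
have HX : forall t, (1 <= t <= T.+1)%N -> X (x t).
  elim=> [//|t IH] /andP [_ Ht].
  case: t IH Ht => [_ _|t IH Ht] //.
  have Ht' : (1 <= t.+1 <= T)%N by [].
  have [[Xp _] ->] := Hit _ Ht'.
  by apply: (proj1 (HPhi _ Ht')).
set A := fun t => Edot (Evsub (x t) (u t)) (Evsub (x t) (u t)).
set dl := fun t => Enorm2 (Evsub (u t.+1) (Phi t (u t))).
have Step : forall t, (1 <= t <= T)%N ->
  f t (x t) - f t (u t) <= (A t - A t.+1) / (2 * eta) + D / eta * dl t + eta * G ^ 2 / 2.
  move=> t Ht.
  have Ht1 : (1 <= t <= T.+1)%N by case/andP: Ht => -> /= /leqW.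
  have Ht2 : (1 <= t.+1 <= T.+1)%N by case/andP: Ht.
  have Xxt := HX _ Ht1; have Xut := Hu _ Ht1; have Xxt1 := HX _ Ht2; have Xut1 := Hu _ Ht2.
  have [Hconv [Hgr HG]] := Hf _ Ht.
  have [HPX HPL] := HPhi _ Ht.
  have [Hproj Hxe] := Hit _ Ht.
  set g := grad t (x t) in Hproj.
  set p := xbar t.+1 in Hproj Hxe.
  have Xp := proj1 Hproj.
  have Hlin := @linz _ _ _ _ _ _ Hconv Xxt Xut (Hgr _ Xxt).
  have Hpn := @proj_ne _ _ _ _ _ Hcx Hproj Xut.
  have Ez : Edot (Evsub (Evsub (x t) (Evscale eta g)) (u t)) (Evsub (Evsub (x t) (Evscale eta g)) (u t))
    = A t - 2 * eta * Edot g (Evsub (x t) (u t)) + eta ^ 2 * Edot g g.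
    rewrite (Edot_comb2 _ (Evsub (x t) (u t)) g (a:=1) (b:=-eta)).
      rewrite /A (Edot_sym (Evsub (x t) (u t)) g); ring.
    by move=> i; rewrite /Evsub /Evscale; ring.
  have Hgg : Edot g g <= G ^ 2.
    have := HG _ Xxt; rewrite -/g => H1.
    have := Enorm2_sq g; have := Enorm2_ge0 g; nra.
  set B := Edot (Evsub p (u t)) (Evsub p (u t)) in Hpn.
  set a := Enorm2 (Evsub (x t.+1) (u t.+1)).
  set b := Enorm2 (Evsub p (u t)).
  have Ha0 : 0 <= a by apply: Enorm2_ge0.
  have Hb0 : 0 <= b by apply: Enorm2_ge0.
  have Hd0 : 0 <= dl t by apply: Enorm2_ge0.
  have HaD : a <= D by apply: Hdiam.
  have HbD : b <= D by apply: Hdiam.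
  have Hab : a <= b + dl t.
    have H1 := @triangle _ (Evsub (x t.+1) (u t.+1))
      (Evsub (Phi t p) (Phi t (u t))) (Evsub (Phi t (u t)) (u t.+1)).
    have H2 : Enorm2 (Evsub (Phi t (u t)) (u t.+1)) = dl t.
      apply: norm_eq.
      rewrite (Edot_comb2 _ (Evsub (u t.+1) (Phi t (u t))) (Evsub (u t.+1) (Phi t (u t))) (a:=-1) (b:=0)).
        ring.
      by move=> i; rewrite /Evsub; ring.
    have H3 := HPL _ _ Xp Xut.
    have : a <= Enorm2 (Evsub (Phi t p) (Phi t (u t))) + Enorm2 (Evsub (Phi t (u t)) (u t.+1)).
      apply: H1 => i; rewrite Hxe /Evsub; ring.
    rewrite H2 -/b in H3 *; lra.
  have EA1 : A t.+1 = a ^ 2 by rewrite /a Enorm2_sq.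
  have EB : B = b ^ 2 by rewrite /b Enorm2_sq.
  have Hsq : A t.+1 - B <= 2 * D * dl t.
    rewrite EA1 EB.
    have -> : a ^ 2 - b ^ 2 = (a - b) * (a + b) by ring.
    have : (a - b) * (a + b) <= dl t * (a + b) by apply: Rmult_le_compat_r; lra.
    nra.
  have Hm : 2 * eta * (f t (x t) - f t (u t)) <= A t - A t.+1 + 2 * D * dl t + eta ^ 2 * G ^ 2.
    have H6 : 2 * eta * (f t (x t) - f t (u t)) <= 2 * eta * Edot g (Evsub (x t) (u t)).
      by apply: Rmult_le_compat_l; [lra | exact: Hlin].
    have H7 : eta ^ 2 * Edot g g <= eta ^ 2 * G ^ 2.
      by apply: Rmult_le_compat_l; nra.
    lra.
  apply: (Rmult_le_reg_l (2 * eta)); first lra.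
  have -> : 2 * eta * ((A t - A t.+1) / (2 * eta) + D / eta * dl t + eta * G ^ 2 / 2)
    = A t - A t.+1 + 2 * D * dl t + eta ^ 2 * G ^ 2 by field; lra.
  exact: Hm.
have Htel := @tele T (fun t => f t (x t)) (fun t => f t (u t)) (fun t => D / eta * dl t)
  A (2 * eta) (eta * G ^ 2 / 2) ltac:(lra) Step.
have Esb : EsumT T (fun t => D / eta * dl t) = D / eta * EsumT T dl by rewrite /EsumT sum_scal.
rewrite Esb in Htel.
have HA1 : A 1%N <= D ^ 2.
  have H1 : Enorm2 (Evsub (x 1%N) (u 1%N)) <= D by apply: Hdiam => //; apply: Hu.
  rewrite /A -Enorm2_sq; have := Enorm2_ge0 (Evsub (x 1%N) (u 1%N)); nra.
have HAT : 0 <= A T.+1 by apply: Edot_ge0.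
have : (A 1%N - A T.+1) / (2 * eta) <= D ^ 2 / (2 * eta).
  rewrite /Rdiv; apply: Rmult_le_compat_r; last lra.
  apply: Rlt_le; apply: Rinv_0_lt_compat; lra.
rewrite -/dl.
have -> : eta * INR T * G ^ 2 / 2 = INR T * (eta * G ^ 2 / 2) by field.
lra.
Qed.
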